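(* Let $\Gamma=(\mathcal{V},\mathcal{H})$ be a bipartite oriented hypergraph. Then $\Gamma$ is isospectral to its underlying hypergraph $\Gamma'$, i.e. the normalized Laplacian $L$ of $\Gamma$ and the normalized Laplacian $L'$ of $\Gamma'$ have the same eigenvalues with the same multiplicities. In particular, $\Gamma$ is isospectral to every other bipartite oriented hypergraph that has the same underlying hypergraph as $\Gamma$.
   Context: An oriented hypergraph is a pair $\Gamma=(\mathcal{V},\mathcal{H})$ where $\mathcal{V}=\{v_1,\ldots,v_N\}$ is a finite set of vertices and each hyperedge $h\in\mathcal{H}$ is a pair $(h_{in},h_{out})$ of disjoint nonempty subsets of $\mathcal{V}$ (inputs and outputs). Standing assumption: $\Gamma$ has no isolated vertices. Two vertices are co-oriented in $h$ if they lie in the same one of $h_{in},h_{out}$, and anti-oriented in $h$ if they lie in different ones. The degree $\deg(v)$ is the number of hyperedges containing $v$ (i.e. with $v\in h_{in}\cup h_{out}$); $D$ is the diagonal matrix of degrees. The adjacency matrix $A$ has $A_{ii}=0$ and, for $i\neq j$, $A_{ij}=\#\{h: v_i,v_j \text{ anti-oriented in } h\}-\#\{h: v_i,v_j\text{ co-oriented in } h\}$. The normalized Laplacian is $L=\mathrm{Id}-D^{-1}A$. The underlying hypergraph $\Gamma'$ has the same vertices and hyperedges $(h_{in}\cup h_{out},\emptyset)$ for $h\in\mathcal{H}$; hence its degrees coincide with those of $\Gamma$, its adjacency matrix is $A'_{ii}=0$, $A'_{ij}=-\#\{h\in\mathcal{H}: v_i,v_j\in h_{in}\cup h_{out}\}$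 for $i\ne j$, and $L'=\mathrm{Id}-D^{-1}A'$. $\Gamma$ is bipartite if $\mathcal{V}=\mathcal{V}_1\sqcup\mathcal{V}_2$ such that every hyperedge either has all its inputs in $\mathcal{V}_1$ and all its outputs in $\mathcal{V}_2$, or all its inputs in $\mathcal{V}_2$ and all its outputs in $\mathcal{V}_1$. *)

(* Defs.v *)
From mathcomp Require Import all_boot all_order all_algebra.
Set Implicit Arguments. Unset Strict Implicit. Unset Printing Implicit Defensive.
Import GRing.Theory Num.Theory.
Local Open Scope ring_scope.

(* An oriented hypergraph on vertices 'I_N with hyperedges indexed by 'I_M:
   hyperedge h is the pair (hin h, hout h). *)

Definition is_oriented_hypergraph (N M : nat) (hin hout : 'I_M -> {set 'I_N}) :=
  forall h : 'I_M, [disjoint hin h & hout h] /\ hin h != set0 /\ hout h != set0.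

Definition hdeg (N M : nat) (hin hout : 'I_M -> {set 'I_N}) (v : 'I_N) : nat :=
  #|[set h : 'I_M | (v \in hin h) || (v \in hout h)]|.

Definition no_isolated_vertices (N M : nat) (hin hout : 'I_M -> {set 'I_N}) :=
  forall v : 'I_N, (0 < hdeg hin hout v)%N.

Definition anti_count (N M : nat) (hin hout : 'I_M -> {set 'I_N}) (i j : 'I_N) : nat :=
  #|[set h : 'I_M | ((i \in hin h) && (j \in hout h)) || ((i \in hout h) && (j \in hin h))]|.

Definition co_count (N M : nat) (hin hout : 'I_M -> {set 'I_N}) (i j : 'I_N) : nat :=
  #|[set h : 'I_M | ((i \in hin h) && (j \in hin h)) || ((i \in hout h) && (j \in hout h))]|.

Definition degmx (R : fieldType) (N M : nat) (hin hout : 'I_M -> {set 'I_N}) : 'M[R]_N :=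
  diag_mx (\row_i ((hdeg hin hout i)%:R : R)).

Definition adjmx (R : fieldType) (N M : nat) (hin hout : 'I_M -> {set 'I_N}) : 'M[R]_N :=
  \matrix_(i, j) (if i == j then 0
                  else ((anti_count hin hout i j)%:R - (co_count hin hout i j)%:R : R)).

Definition nlap (R : fieldType) (N M : nat) (hin hout : 'I_M -> {set 'I_N}) : 'M[R]_N :=
  1%:M - invmx (degmx R hin hout) *m adjmx R hin hout.

Definition und_in (N M : nat) (hin hout : 'I_M -> {set 'I_N}) : 'I_M -> {set 'I_N} :=
  fun h => hin h :|: hout h.
Definition und_out (N M : nat) : 'I_M -> {set 'I_N} := fun _ => set0.

Definition bipartite (N M : nat) (hin hout : 'I_M -> {set 'I_N}) :=
  exists V1 : {set 'I_N},
    forall h : 'I_M,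
      (hin h \subset V1) && (hout h \subset ~: V1)
      || (hin h \subset ~: V1) && (hout h \subset V1).

Definition same_underlying (N M M2 : nat) (hin hout : 'I_M -> {set 'I_N})
    (hin2 hout2 : 'I_M2 -> {set 'I_N}) :=
  exists sigma : 'I_M -> 'I_M2, bijective sigma /\
    forall h, hin h :|: hout h = hin2 (sigma h) :|: hout2 (sigma h).

(* Main.v *)
Require Import Defs.
From mathcomp Require Import all_boot all_order all_algebra.
Set Implicit Arguments. Unset Strict Implicit. Unset Printing Implicit Defensive.
Import GRing.Theory Num.Theory.
Local Open Scope ring_scope.

Lemma char_poly_sign (R : comNzRingType) n (s : 'I_n -> R) (A B : 'M[R]_n) :
  (forall i, s i * s i = 1) -> (forall i j, B i j = s i * A i j * s j) ->
  char_poly B = char_poly A.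
Proof.
move=> ss hB.
pose Sp := diag_mx (\row_i (s i)%:P) : 'M[{poly R}]_n.
have E : char_poly_mx B = Sp *m char_poly_mx A *m Sp.
  apply/matrixP => i j; rewrite mul_mx_diag mul_diag_mx !mxE hB.
  case: eqP => [->|_]; rewrite ?mulr1n ?mulr0n.
    have aa : (s j)%:P * (s j)%:P = 1 :> {poly R} by rewrite -polyCM ss.
    rewrite !rmorphM /= mulrBr mulrBl (mulrC _ 'X) -(mulrA 'X) aa mulr1.
    by [].
  by rewrite !rmorphM /= !sub0r mulrN mulNr.
rewrite /char_poly E !det_mulmx mulrAC -det_mulmx mulmx_diag.
have -> : diag_mx (\row_j ((\row_i (s i)%:P) 0 j * (\row_i (s i)%:P) 0 j)) = 1%:M :> 'M[{poly R}]_n.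
  apply/matrixP => i j; rewrite !mxE -rmorphM ss.
  by case: eqP.
by rewrite det1 mul1r.
Qed.

Lemma card_bij (N M M2 : nat) (U : 'I_M -> {set 'I_N}) (U2 : 'I_M2 -> {set 'I_N})
  (sigma : 'I_M -> 'I_M2) (P : {set 'I_N} -> bool) :
  bijective sigma -> (forall h, U h = U2 (sigma h)) ->
  #|[set h | P (U h)]| = #|[set h | P (U2 h)]|.
Proof.
move=> bs hU.
have -> : [set h | P (U2 h)] = sigma @: [set h | P (U h)].
  case: bs => g sg gs.
  apply/setP => h2; rewrite inE; apply/idP/imsetP.
    by move=> H; exists (g h2); rewrite // inE hU gs.
  by case=> h; rewrite inE hU => H ->.
by rewrite card_imset //; apply: bij_inj.
Qed.

Lemma und_same (R : fieldType) (N M M2 : nat) (hin hout : 'I_M -> {set 'I_N})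
    (hin2 hout2 : 'I_M2 -> {set 'I_N}) :
  same_underlying hin hout hin2 hout2 ->
  nlap R (und_in hin hout) (@und_out N M) = nlap R (und_in hin2 hout2) (@und_out N M2).
Proof.
case=> sigma [bs hs].
have hU : forall h, und_in hin hout h = und_in hin2 hout2 (sigma h) by move=> h; exact: hs.
rewrite /nlap /degmx /adjmx; congr (_ - invmx _ *m _).
  apply/matrixP => i j; rewrite !mxE /hdeg /und_out.
  by rewrite (card_bij (fun X => (i \in X) || (i \in set0)) bs hU).
apply/matrixP => i j; rewrite !mxE /anti_count /co_count /und_out.
rewrite (card_bij (fun X => ((i \in X) && (j \in set0)) || ((i \in set0) && (j \in X))) bs hU).
by rewrite (card_bij (fun X => ((i \in X) && (j \in X)) || ((i \in set0) && (j \in set0))) bs hU).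
Qed.

Lemma bip_sim (R : fieldType) (N M : nat) (hin hout : 'I_M -> {set 'I_N}) :
  is_oriented_hypergraph hin hout -> bipartite hin hout ->
  char_poly (nlap R hin hout) = char_poly (nlap R (und_in hin hout) (@und_out N M)).
Proof.
move=> ho [V1 hV].
pose s := fun i : 'I_N => if i \in V1 then 1 else -1 : R.
have ss : forall i, s i * s i = 1 by move=> i; rewrite /s; case: ifP; rewrite ?mulr1 ?mulrNN ?mulr1.
pose S := diag_mx (\row_i s i).
have SS : S *m S = 1%:M.
  rewrite mulmx_diag; apply/matrixP => i j; rewrite !mxE ss; by case: eqP.
have hD : degmx R (und_in hin hout) (@und_out N M) = degmx R hin hout.
  apply/matrixP => i j; rewrite !mxE /hdeg /und_out. congr (_%:R *+ _).
  by apply: eq_card => h; rewrite /und_in !inE orbF.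
have F : forall h, exists b : bool, forall (x : 'I_N),
    ((x \in hin h) ==> ((x \in V1) == b)) && ((x \in hout h) ==> ((x \in V1) == ~~ b))
    && ~~ ((x \in hin h) && (x \in hout h)).
  move=> h; case: (ho h) => dj _.
  have nd : forall x : 'I_N, ~~ ((x \in hin h) && (x \in hout h)).
    by move=> x; apply/negP => /andP [a b]; move: dj; rewrite disjoint_subset => /subsetP /(_ x a); rewrite inE b.
  move: (hV h) => /orP [/andP [s1 s2]|/andP [s1 s2]].
    exists true => x; rewrite nd andbT; apply/andP; split; apply/implyP => xi.
      by rewrite (subsetP s1 _ xi).
    by move: (subsetP s2 _ xi); rewrite inE => /negbTE ->.
  exists false => x; rewrite nd andbT; apply/andP; split; apply/implyP => xi.
    by move: (subsetP s1 _ xi); rewrite inE => /negbTE ->.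
  by rewrite (subsetP s2 _ xi).
have hA : forall i j, i != j ->
   adjmx R (und_in hin hout) (@und_out N M) i j = s i * adjmx R hin hout i j * s j.
  move=> i j ij; rewrite !mxE (negbTE ij) /anti_count /co_count /und_out.
  set c := #|[set h | ((i \in und_in hin hout h) && (j \in und_in hin hout h))
                     || ((i \in set0) && (j \in set0))]|.
  have e0 : #|[set h : 'I_M | ((i \in und_in hin hout h) && (j \in set0))
                     || ((i \in set0) && (j \in und_in hin hout h))]| = 0%N.
    by apply/eqP; rewrite cards_eq0; apply/eqP/setP => h; rewrite !inE !andbF.
  have ea : #|[set h | ((i \in hin h) && (j \in hout h)) || ((i \in hout h) && (j \in hin h))]|
       = if (i \in V1) == (j \in V1) then 0%N else c.
    case: ifP => E.
      apply/eqP; rewrite cards_eq0; apply/eqP/setP => h; rewrite !inE.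
      have [b Fh] := F h; have Fi := Fh i; have Fj := Fh j; clear Fh.
      move: E Fi Fj.
      case: (i \in hin h); case: (i \in hout h); case: (j \in hin h); case: (j \in hout h);
      case: (i \in V1); case: (j \in V1); case: b => //.
    rewrite /c; apply: eq_card => h; rewrite /und_in !inE !andbF orbF.
    have [b Fh] := F h; have Fi := Fh i; have Fj := Fh j; clear Fh.
    move: E Fi Fj.
    case: (i \in hin h); case: (i \in hout h); case: (j \in hin h); case: (j \in hout h);
    case: (i \in V1); case: (j \in V1); case: b => //.
  have ec : #|[set h | ((i \in hin h) && (j \in hin h)) || ((i \in hout h) && (j \in hout h))]|
       = if (i \in V1) == (j \in V1) then c else 0%N.
    case: ifP => E; last first.
      apply/eqP; rewrite cards_eq0; apply/eqP/setP => h; rewrite !inE.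
      have [b Fh] := F h; have Fi := Fh i; have Fj := Fh j; clear Fh.
      move: E Fi Fj.
      case: (i \in hin h); case: (i \in hout h); case: (j \in hin h); case: (j \in hout h);
      case: (i \in V1); case: (j \in V1); case: b => //.
    rewrite /c; apply: eq_card => h; rewrite /und_in !inE !andbF orbF.
    have [b Fh] := F h; have Fi := Fh i; have Fj := Fh j; clear Fh.
    move: E Fi Fj.
    case: (i \in hin h); case: (i \in hout h); case: (j \in hin h); case: (j \in hout h);
    case: (i \in V1); case: (j \in V1); case: b => //.
  rewrite e0 ea ec /s.
  by case: (i \in V1); case: (j \in V1) => /=; rewrite ?mulr1 ?mul1r ?mulrN1 ?mulN1r
       ?sub0r ?subr0 ?opprK.
have hA' : adjmx R (und_in hin hout) (@und_out N M) = S *m adjmx R hin hout *m S.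
  apply/matrixP => i j; rewrite mul_mx_diag mul_diag_mx !mxE.
  case: (eqVneq i j) => [<-|ij]; last by have := hA i j ij; rewrite !mxE (negbTE ij).
  by rewrite mulr0 mul0r.
have comm : S *m invmx (degmx R hin hout) = invmx (degmx R hin hout) *m S.
  have cD : S *m degmx R hin hout = degmx R hin hout *m S by apply: diag_mx_comm.
  case: (boolP (degmx R hin hout \in unitmx)) => U; last by rewrite invmx_out.
  set D := degmx R hin hout in cD U *.
  rewrite -[LHS]mul1mx -(mulVmx U) -mulmxA (mulmxA D) -cD.
  by rewrite -!mulmxA mulmxV // mulmx1.
symmetry; apply: (@char_poly_sign _ _ s) => // i j.
have -> : nlap R (und_in hin hout) (@und_out N M) = S *m nlap R hin hout *m S.
  rewrite /nlap hD hA' mulmxBr mulmxBl mulmx1 SS !mulmxA comm.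
  by [].
by rewrite mul_mx_diag mul_diag_mx !mxE.
Qed.

Theorem mainTheorem1 (R : realFieldType) (N M : nat) (hin hout : 'I_M -> {set 'I_N}) :
  is_oriented_hypergraph hin hout ->
  no_isolated_vertices hin hout ->
  bipartite hin hout ->
  char_poly (nlap R hin hout) = char_poly (nlap R (und_in hin hout) (@und_out N M))
  /\ (forall (M2 : nat) (hin2 hout2 : 'I_M2 -> {set 'I_N}),
        is_oriented_hypergraph hin2 hout2 ->
        bipartite hin2 hout2 ->
        same_underlying hin hout hin2 hout2 ->
        char_poly (nlap R hin hout) = char_poly (nlap R hin2 hout2)).
Proof.
move=> ho _ hb; split; first exact: bip_sim.
move=> M2 hin2 hout2 ho2 hb2 su.
by rewrite (bip_sim R ho hb) (bip_sim R ho2 hb2) (und_same R su).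
Qed.
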